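(* Let $X,X_1,X_2,\dots$ be i.i.d. positive random variables with $\mathbb{E}X=1$ and $\mathbb{E}X^2<\infty$, let $p\ge2$ be an integer, and let $T_n=\frac{X_1^2+\dots+X_n^2}{X_1+\dots+X_n}$. If the sequence $(\mathbb{E}T_n^p)_n$ is bounded, then $\mathbb{E}X^p<\infty$. Moreover, for every $n\ge2$, $$\mathbb{E}\,\frac{X_1^{2p}}{\left(\frac1n(X_1+X_2+\dots+X_n)\right)^p}\ \ge\ 2^{-p}n^p\,\mathbb{E}\left[X^p1_{\{X\ge n\}}\right].$$ *)

(* Defs.v *)
From HB Require Import structures.
From mathcomp Require Import all_boot all_order all_algebra.
From mathcomp Require Import all_classical all_reals all_analysis.
Set Implicit Arguments. Unset Strict Implicit. Unset Printing Implicit Defensive.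
Import Order.TTheory GRing.Theory Num.Theory.
Local Open Scope classical_set_scope.
Local Open Scope ring_scope.

Definition mutually_independent {d} {T : measurableType d} {R : realType}
  (P : probability T R) (X : nat -> T -> R) : Prop :=
  forall (I : seq nat) (B : nat -> set R), uniq I ->
    (forall i, measurable (B i)) ->
    P (\bigcap_(i in [set` I]) (X i @^-1` B i)) =
    (\prod_(i <- I) P (X i @^-1` B i))%E.

Definition identically_distributed {d} {T : measurableType d} {R : realType}
  (P : probability T R) (X : nat -> T -> R) : Prop :=
  forall (i : nat) (B : set R), measurable B ->
    P (X i @^-1` B) = P (X 0%N @^-1` B).

Definition iid {d} {T : measurableType d} {R : realType}
  (P : probability T R) (X : nat -> T -> R) : Prop :=
  [/\ forall i, measurable_fun setT (X i),
      identically_distributed P X & mutually_independent P X].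

(* S_n = X_1 + ... + X_n  (the sequence X is indexed X 0 = X, X 1, X 2, ...) *)
Definition Ssum {T : Type} {R : realType} (X : nat -> T -> R) (n : nat) (t : T) : R :=
  \sum_(1 <= i < n.+1) X i t.

Definition Tn {T : Type} {R : realType} (X : nat -> T -> R) (n : nat) (t : T) : R :=
  (\sum_(1 <= i < n.+1) X i t ^+ 2) / Ssum X n t.

(* Main.v *)
Require Import Defs.
From HB Require Import structures.
From mathcomp Require Import all_boot all_order all_algebra.
From mathcomp Require Import all_classical all_reals all_analysis measurable_realfun.
From mathcomp Require Import ring lra.
Import Order.TTheory GRing.Theory Num.Theory.
Local Open Scope classical_set_scope.
Local Open Scope ring_scope.
Set Implicit Arguments. Unset Strict Implicit. Unset Printing Implicit Defensive.

Lemma amgm (R : realFieldType) (a u : R) p : 0 <= a -> 0 <= u ->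
  p.+1%:R * a * u ^+ p <= a ^+ p.+1 + p%:R * u ^+ p.+1.
Proof.
move=> a0 u0; elim: p => [|p IH].
  by rewrite expr0 expr1 mulr1 mul0r addr0 mul1r.
have key : 0 <= (a ^+ p.+1 - u ^+ p.+1) * (a - u).
  have [au|ua] := leP a u.
    apply: mulr_le0; rewrite subr_le0 //.
    by apply: (@lerXn2r R p.+1 a u); rewrite ?nnegrE.
  apply: mulr_ge0; rewrite subr_ge0; last exact: ltW.
  by apply: (@lerXn2r R p.+1 u a); rewrite ?nnegrE // ltW.
have IHu := ler_wpM2r u0 IH.
rewrite !exprS in IHu key *.
set A := a ^+ p in IHu key *; set V := u ^+ p in IHu key *.
rewrite -!natr1 in IHu *.
set q : R := p%:R in IHu *.
have q0 : 0 <= q by rewrite /q.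
nra.
Qed.

Lemma tangent (R : realFieldType) (x y m w : R) p : 0 < x -> 0 <= y -> 0 <= m -> 0 <= w ->
  w / (x + m) ^+ p + p%:R * w / (x + m) ^+ p.+1 * m <=
  w / (x + y) ^+ p + p%:R * w / (x + m) ^+ p.+1 * y.
Proof.
move=> x0 y0 m0 w0.
have a0 : 0 < x + m by rewrite ltr_wpDr.
have u0 : 0 < x + y by rewrite ltr_wpDr.
have H := @amgm _ (x + m) (x + y) p (ltW a0) (ltW u0).
rewrite -subr_ge0.
have A0 : (x + m) ^+ p != 0 by rewrite expf_neq0 // gt_eqF.
have U0 : (x + y) ^+ p != 0 by rewrite expf_neq0 // gt_eqF.
have a0' : x + m != 0 by rewrite gt_eqF.
have u0' : x + y != 0 by rewrite gt_eqF.
have -> : w / (x + y) ^+ p + p%:R * w / (x + m) ^+ p.+1 * y - (w / (x + m) ^+ p + p%:R * w / (x + m) ^+ p.+1 * m)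
   = w / ((x + m) ^+ p.+1 * (x + y) ^+ p) * ((x + m) ^+ p.+1 + p%:R * (x + y) ^+ p.+1 - p.+1%:R * (x + m) * (x + y) ^+ p).
  rewrite !exprS -natr1; move: A0 U0.
  set A := (x + m) ^+ p; set U := (x + y) ^+ p; set q : R := p%:R; move=> A0 U0; clearbody A U q.
  by field; rewrite ?A0 ?U0 ?a0' ?u0'.
apply: mulr_ge0; last by rewrite subr_ge0.
apply: divr_ge0 => //; apply: mulr_ge0; apply: exprn_ge0; exact: ltW.
Qed.

Section aux.
Context d (T : measurableType d) (R : realType) (P : probability T R).
Local Open Scope ereal_scope.

Definition mkmf d' (T' : measurableType d') (f : T -> T') (mf : measurable_fun setT f) : {mfun T >-> T'} :=
  HB.pack f (isMeasurableFun.Build _ _ _ _ f mf).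

Lemma indep2 (X : nat -> T -> R) (mX : forall i, measurable_fun setT (X i))
  (HI : mutually_independent P X) j k (f g : R -> R) :
  j != k -> measurable_fun setT f -> measurable_fun setT g ->
  (forall x, 0 <= f x)%R -> (forall x, 0 <= g x)%R ->
  \int[P]_t (f (X j t) * g (X k t))%:E =
  \int[P]_t (f (X j t))%:E * \int[P]_t (g (X k t))%:E.
Proof.
move=> jk mf mg f0 g0.
pose Xj := mkmf (mX j). pose Xk := mkmf (mX k).
have mZ : measurable_fun setT (fun t => (X j t, X k t)) := measurable_fun_pair (mX j) (mX k).
pose Z := mkmf mZ.
have rect A B : measurable A -> measurable B ->
    distribution P Z (A `*` B) = distribution P Xj A * distribution P Xk B.
  move=> mA mB; rewrite /distribution /pushforward /=.
  rewrite (_ : _ @^-1` _ = \bigcap_(i in [set` [:: j; k]]) X i @^-1` (if i == j then A else B)).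
    rewrite HI /=; last 2 first.
    - by rewrite /= inE jk.
    - by move=> i; case: ifP.
    by rewrite !big_cons big_nil mule1 eqxx eq_sym (negbTE jk).
  apply/seteqP; split => t /=.
    move=> [/= hA hB] i; rewrite /= !inE => /orP[/eqP->|/eqP->].
      by rewrite eqxx.
    by rewrite eq_sym (negbTE jk).
  move=> H; split.
    by have := H j; rewrite /= !inE eqxx /= => /(_ isT).
  by have := H k; rewrite /= !inE eqxx orbT eq_sym (negbTE jk) => /(_ isT).
have mF : measurable_fun setT (fun z : (R * R)%type => (f z.1 * g z.2)%:E).
  apply/measurable_EFinP; apply: measurable_funM.
    exact: measurableT_comp mf measurable_fst.
  exact: measurableT_comp mg measurable_snd.
have F0 : forall z : (R * R)%type, 0 <= (f z.1 * g z.2)%:E.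
  by move=> z; rewrite lee_fin mulr_ge0.
transitivity (\int[distribution P Z]_z (f z.1 * g z.2)%:E).
  by rewrite ge0_integral_distribution.
rewrite (eq_measure_integral (distribution P Xj \x distribution P Xk)); last first.
  by move=> A mA _; apply/esym/product_measure_unique.
rewrite fubini_tonelli1 //.
rewrite /fubini_F /=.
have mgE : measurable_fun setT (fun y : R => (g y)%:E) by exact/measurable_EFinP.
have mfE : measurable_fun setT (fun y : R => (f y)%:E) by exact/measurable_EFinP.
rewrite (eq_integral (fun x => (f x)%:E * \int[distribution P Xk]_y (g y)%:E)); last first.
  move=> x _; under eq_integral => y _ do rewrite EFinM.
  by rewrite ge0_integralZl_EFin // => y _; rewrite lee_fin.
rewrite ge0_integralZr //; last 2 first.
- by move=> y _; rewrite lee_fin.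
- by apply: integral_ge0 => y _; rewrite lee_fin.
rewrite !ge0_integral_distribution //.
all: by move=> y; rewrite lee_fin.
Qed.
End aux.

Lemma minv (R : realType) : measurable_fun [set: R] (@GRing.inv R).
Proof.
rewrite (_ : [set: R] = [set 0%R] `|` [set x | x != 0]); last first.
  apply/seteqP; split => x //= _; case: (eqVneq x 0) => [->|nx]; [left|right] => //.
apply/measurable_funU.
- exact: measurable_set1.
- by apply: open_measurable; exact: open_neq.
split; first exact: measurable_fun_set1.
apply: open_continuous_measurable_fun; first exact: open_neq.
by move=> x; rewrite inE /= => x0; exact: inv_continuous.
Qed.

Section main.
Context d (T : measurableType d) (R : realType) (P : probability T R) (X : nat -> T -> R).
Hypothesis mX : forall i, measurable_fun setT (X i).
Hypothesis HD : identically_distributed P X.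
Hypothesis HI : mutually_independent P X.
Hypothesis Hpos : forall i t, 0 < X i t.
Local Open Scope ereal_scope.
Hypothesis HE1 : \int[P]_t (X 0%N t)%:E = 1.

Lemma ident_int i (g : R -> R) : measurable_fun setT g -> (forall x, 0 <= g x)%R ->
  \int[P]_t (g (X i t))%:E = \int[P]_t (g (X 0%N t))%:E.
Proof.
move=> mg g0.
have mgE : measurable_fun setT (EFin \o g) by exact/measurable_EFinP.
transitivity (\int[distribution P (mkmf (mX i))]_y (EFin \o g) y).
  by rewrite ge0_integral_distribution // => y; rewrite lee_fin.
transitivity (\int[distribution P (mkmf (mX 0%N))]_y (EFin \o g) y); last first.
  by rewrite ge0_integral_distribution // => y; rewrite lee_fin.
apply: eq_measure_integral => A mA _ /=.
by rewrite /distribution /pushforward /= HD.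
Qed.

Lemma EX1 i : \int[P]_t (X i t)%:E = 1.
Proof.
rewrite (eq_integral (fun t => (`|X i t|)%:E)); last first.
  by move=> t _; rewrite ger0_norm // ltW.
rewrite (@ident_int i (@Num.norm _ R)); last 2 first.
- exact: normr_measurable.
- by move=> x; rewrite normr_ge0.
rewrite -HE1; apply: eq_integral => t _.
by rewrite ger0_norm // ltW.
Qed.

Lemma indepX1 i (f : R -> R) : (1 < i)%N -> measurable_fun setT f -> (forall x, 0 <= f x)%R ->
  \int[P]_t (f (X 1%N t) * X i t)%:E = \int[P]_t (f (X 1%N t))%:E.
Proof.
move=> i1 mf f0.
rewrite (eq_integral (fun t => (f (X 1%N t) * `|X i t|)%:E)); last first.
  by move=> t _; rewrite ger0_norm // ltW.
have E : \int[P]_t (`|X i t|)%:E = 1.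
  by rewrite -(EX1 i); apply: eq_integral => t _; rewrite ger0_norm // ltW.
rewrite (@indep2 _ _ _ P X mX HI 1%N i f (@Num.norm _ R)) //.
- by rewrite E mule1.
- by rewrite neq_ltn i1.
Qed.


Lemma intD (f g : T -> R) : measurable_fun setT f -> measurable_fun setT g ->
  (forall t, 0 <= f t)%R -> (forall t, 0 <= g t)%R ->
  \int[P]_t (f t + g t)%:E = \int[P]_t (f t)%:E + \int[P]_t (g t)%:E.
Proof.
move=> mf mg f0 g0; under eq_integral do rewrite EFinD.
apply: ge0_integralD => //.
- by move=> t _; rewrite lee_fin.
- exact/measurable_EFinP.
- by move=> t _; rewrite lee_fin.
- exact/measurable_EFinP.
Qed.

Lemma intle (f g : T -> R) : measurable_fun setT f -> measurable_fun setT g ->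
  (forall t, 0 <= f t)%R -> (forall t, f t <= g t)%R ->
  \int[P]_t (f t)%:E <= \int[P]_t (g t)%:E.
Proof.
move=> mf mg f0 fg; apply: ge0_le_integral => //.
- by move=> t _; rewrite lee_fin.
- exact/measurable_EFinP.
- exact/measurable_EFinP.
- by move=> t _; rewrite lee_fin.
Qed.

Lemma intZ (k : R) (f : T -> R) : (0 <= k)%R -> measurable_fun setT f ->
  (forall t, 0 <= f t)%R ->
  \int[P]_t (k * f t)%:E = k%:E * \int[P]_t (f t)%:E.
Proof.
move=> k0 mf f0; under eq_integral do rewrite EFinM.
apply: ge0_integralZl_EFin => //.
- by move=> t _; rewrite lee_fin.
- exact/measurable_EFinP.
Qed.

Lemma int_ge0 (f : T -> R) : (forall t, 0 <= f t)%R -> 0 <= \int[P]_t (f t)%:E.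
Proof. by move=> f0; apply: integral_ge0 => t _; rewrite lee_fin. Qed.

Lemma int_bound (f : T -> R) (C : R) : measurable_fun setT f ->
  (forall t, 0 <= f t)%R -> (forall t, f t <= C)%R ->
  \int[P]_t (f t)%:E <= C%:E.
Proof.
move=> mf f0 fC.
apply: le_trans (intle mf (measurable_cst C) f0 fC) _.
have -> : (fun t : T => C%:E) = cst C%:E by [].
rewrite (@integral_cst _ _ _ P setT measurableT C%:E).
suff -> : (P : measure T R) setT = 1 by rewrite mule1.
exact: probability_setT.
Qed.

Lemma partK n K p : (2 <= n)%N ->
  (2%:R ^- p * n%:R ^+ p)%:E *
    \int[P]_t (X 0%N t ^+ p * \1_([set` `[n%:R, K%:R]%R]) (X 0%N t))%:E
  <= \int[P]_t (X 1%N t ^+ (2 * p) / (n%:R^-1 * Ssum X n t) ^+ p)%:E.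
Proof.
move=> n2.
pose m : R := (n - 1)%:R.
have m0 : (0 <= m)%R by rewrite /m.
pose Sp t := (\sum_(2 <= i < n.+1) X i t)%R.
have SE t : Ssum X n t = (X 1%N t + Sp t)%R.
  by rewrite /Ssum big_ltn // ltnS ltnW.
have Sp0 t : (0 <= Sp t)%R by rewrite /Sp; apply: sumr_ge0 => i _; exact: ltW.
pose ind := fun x : R => (\1_([set` `[n%:R, K%:R]%R]) x : R).
have indE (x : R) : ind x = (n%:R <= x <= K%:R)%R%:R.
  by rewrite /ind indicE mem_setE in_itv.
have ind01 x : (0 <= ind x <= 1)%R.
  by rewrite indE; case: (n%:R <= x <= K%:R)%R => /=; rewrite ?ler01 ?lexx.
have indP x : ind x != 0%R -> (n%:R <= x <= K%:R)%R.
  by rewrite indE; case: (n%:R <= x <= K%:R)%R => //=; rewrite eqxx.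
have n0 : (0 < n%:R :> R)%R by rewrite ltr0n (leq_trans _ n2).
have mn : (m <= n%:R :> R)%R by rewrite /m ler_nat leq_subr.
pose w := fun x : R => (x ^+ (2 * p) * ind x)%R.
pose c := fun x : R => (p%:R * w x / (x + m) ^+ p.+1)%R.
have mind : measurable_fun setT ind.
  by apply: measurable_indic; exact: measurable_itv.
have mw : measurable_fun setT w.
  by apply: measurable_funM => //; exact: measurable_funX.
have mc : measurable_fun setT c.
  apply: measurable_funM; first by apply: measurable_funM => //; exact: measurable_cst.
  have h1 : measurable_fun setT (fun x : R => x + m)%R.
    by apply: measurable_funD => //; exact: measurable_cst.
  have h2 := measurable_funX p.+1 h1.
  exact: (measurableT_comp (@minv R) h2).
have w0 x : (0 <= w x)%R.
  rewrite /w; have [->|/indP/andP[nx _]] := eqVneq (ind x) 0%R; first by rewrite mulr0.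
  by rewrite mulr_ge0 ?exprn_ge0 ?(andP (ind01 x)).1 // (le_trans (ltW n0)).
have c0 x : (0 <= c x)%R.
  rewrite /c /w; have [->|/indP/andP[nx _]] := eqVneq (ind x) 0%R.
    by rewrite mulr0 mulr0 mul0r.
  rewrite divr_ge0 ?mulr_ge0 ?exprn_ge0 ?(andP (ind01 x)).1 //.
  - exact: le_trans (ltW n0) nx.
  - by rewrite addr_ge0 // (le_trans (ltW n0)).
have mSp : measurable_fun setT Sp by apply: measurable_sum => i.
pose fA := fun t => (w (X 1%N t) / (X 1%N t + Sp t) ^+ p)%R.
pose fB := fun t => (c (X 1%N t) * Sp t)%R.
pose fC := fun t => (w (X 1%N t) / (X 1%N t + m) ^+ p)%R.
pose fD := fun t => (c (X 1%N t) * m)%R.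
have mwX : measurable_fun setT (fun t => w (X 1%N t)) := measurableT_comp mw (mX 1%N).
have mcX : measurable_fun setT (fun t => c (X 1%N t)) := measurableT_comp mc (mX 1%N).
have mfA : measurable_fun setT fA.
  apply: measurable_funM => //.
  have h1 : measurable_fun setT (fun t => X 1%N t + Sp t)%R by apply: measurable_funD.
  exact: measurableT_comp (@minv R) (measurable_funX p h1).
have mfB : measurable_fun setT fB by apply: measurable_funM.
have mfC : measurable_fun setT fC.
  apply: measurable_funM => //.
  have h1 : measurable_fun setT (fun t => X 1%N t + m)%R.
    by apply: measurable_funD => //; exact: measurable_cst.
  exact: measurableT_comp (@minv R) (measurable_funX p h1).
have mfD : measurable_fun setT fD by apply: measurable_funM => //; exact: measurable_cst.
have fA0 t : (0 <= fA t)%R.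
  by rewrite /fA divr_ge0 // exprn_ge0 // addr_ge0 // ltW.
have fB0 t : (0 <= fB t)%R by rewrite /fB mulr_ge0.
have fC0 t : (0 <= fC t)%R.
  by rewrite /fC divr_ge0 // exprn_ge0 // addr_ge0 // ltW.
have fD0 t : (0 <= fD t)%R by rewrite /fD mulr_ge0.
have step1 : \int[P]_t (fC t)%:E + \int[P]_t (fD t)%:E <=
             \int[P]_t (fA t)%:E + \int[P]_t (fB t)%:E.
  rewrite -!intD //; apply: intle => //.
  - by apply: measurable_funD.
  - by apply: measurable_funD.
  - by move=> t; rewrite addr_ge0.
  - move=> t; exact: tangent.
have cK x : (c x <= p%:R * K%:R ^+ (2 * p))%R.
  rewrite /c /w; have [->|indx] := eqVneq (ind x) 0%R.
    by rewrite mulr0 mulr0 mul0r mulr_ge0 // exprn_ge0.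
  have /andP[nx xK] := indP x indx.
  have x0 : (0 <= x)%R by exact: le_trans (ltW n0) nx.
  have ->: ind x = 1%R by rewrite indE nx xK.
  have a1 : (1 <= (x + m) ^+ p.+1)%R.
    apply: exprn_ege1; rewrite -[1%R]addr0 lerD //.
    by apply: le_trans nx; rewrite ler1n (leq_trans _ n2).
  rewrite mulr1 ler_pdivrMr ?(lt_le_trans ltr01) //.
  apply: le_trans (ler_peMr _ a1); last by rewrite mulr_ge0 // exprn_ge0 // (le_trans x0).
  apply: ler_wpM2l => //; apply: lerXn2r; rewrite ?nnegrE //; exact: le_trans xK.
set Ic := \int[P]_t (c (X 1%N t))%:E.
have Icfin : Ic \is a fin_num.
  rewrite ge0_fin_numE ?int_ge0 //.
  exact: le_lt_trans (int_bound mcX (fun t => c0 _) (fun t => cK _)) (ltry _).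
have IDE : \int[P]_t (fD t)%:E = m%:E * Ic.
  by rewrite /fD; under eq_integral do rewrite mulrC; rewrite intZ.
have IBD : \int[P]_t (fB t)%:E = \int[P]_t (fD t)%:E.
  rewrite IDE.
  have -> : \int[P]_t (fB t)%:E = \sum_(2 <= i < n.+1) \int[P]_t (c (X 1%N t) * X i t)%:E.
    rewrite -ge0_integral_sum //.
    - by apply: eq_integral => t _; rewrite /fB /Sp mulr_sumr sumEFin.
    - move=> i; apply/measurable_EFinP; exact: measurable_funM.
    - by move=> i t _; rewrite lee_fin mulr_ge0 // ltW.
  rewrite (eq_big_nat _ _ (F2 := fun=> Ic)); last first.
    by move=> i /andP[i2 _]; apply: indepX1.
  rewrite -(fineK Icfin) sumEFin sumr_const_nat subSS -EFinM.
  by rewrite /m mulr_natl.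
have step3 : \int[P]_t (fC t)%:E <= \int[P]_t (fA t)%:E.
  rewrite -(@leeD2rE _ (\int[P]_t (fD t)%:E)); last by rewrite IDE fin_numM.
  by rewrite -{2}IBD.
have mS : measurable_fun setT (Ssum X n).
  by rewrite /Ssum; apply: measurable_sum => i.
have step4 : (n%:R ^+ p)%:E * \int[P]_t (fA t)%:E <=
    \int[P]_t (X 1%N t ^+ (2 * p) / (n%:R^-1 * Ssum X n t) ^+ p)%:E.
  have np0 : (0 <= n%:R ^+ p :> R)%R by rewrite exprn_ge0.
  rewrite -(intZ np0 mfA fA0).
  apply: intle => //.
  - by apply: measurable_funM => //; exact: measurable_cst.
  - apply: measurable_funM; first exact: measurable_funX.
    have h1 : measurable_fun setT (fun t => n%:R^-1 * Ssum X n t)%R.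
      by apply: measurable_funM => //; exact: measurable_cst.
    exact: measurableT_comp (@minv R) (measurable_funX p h1).
  - by move=> t; rewrite mulr_ge0 // exprn_ge0 // ltW.
  - move=> t; rewrite SE exprMn exprVn invfM invrK /fA mulrCA.
    apply: ler_wpM2r.
      by rewrite divr_ge0 ?exprn_ge0 // addr_ge0 // ltW.
    rewrite /w; apply: ler_piMr; last by case/andP: (ind01 (X 1%N t)).
    by rewrite exprn_ge0 // ltW.
have two0 : (2%:R ^+ p != 0 :> R)%R by rewrite expf_neq0 // pnatr_eq0.
have step5 : (2%:R ^- p)%:E * \int[P]_t (X 1%N t ^+ p * ind (X 1%N t))%:E <=
    \int[P]_t (fC t)%:E.
  have k0 : (0 <= 2%:R ^- p :> R)%R by rewrite invr_ge0 exprn_ge0.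
  have mg : measurable_fun setT (fun t => X 1%N t ^+ p * ind (X 1%N t))%R.
    by apply: measurable_funM; [exact: measurable_funX | exact: measurableT_comp mind (mX 1%N)].
  have g0 t : (0 <= X 1%N t ^+ p * ind (X 1%N t))%R.
    by apply: mulr_ge0; [apply: exprn_ge0; exact: ltW | exact: (andP (ind01 _)).1].
  rewrite -(intZ k0 mg g0).
  apply: intle => //.
  - apply: measurable_funM; first exact: measurable_cst.
    by apply: measurable_funM; [exact: measurable_funX | exact: measurableT_comp mind (mX 1%N)].
  - by move=> t; apply: mulr_ge0.
  move=> t; rewrite /fC /w; set x := X 1%N t.
  have [->|indx] := eqVneq (ind x) 0%R; first by rewrite !mulr0 mul0r.
  have /andP[nx xK] := indP x indx.
  have x0 : (0 < x)%R by exact: lt_le_trans n0 nx.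
  have ->: ind x = 1%R by rewrite indE nx xK.
  rewrite !mulr1 ler_pdivlMr; last by rewrite exprn_gt0 // ltr_wpDr.
  have h : ((x + m) ^+ p <= (2%:R * x) ^+ p)%R.
    apply: lerXn2r; rewrite ?nnegrE.
    - by rewrite addr_ge0 // ltW.
    - by rewrite mulr_ge0 // ltW.
    by rewrite mulr2n mulrDl mul1r lerD2l (le_trans mn nx).
  apply: le_trans (ler_wpM2l _ h) _; first by rewrite mulr_ge0 ?invr_ge0 ?exprn_ge0 // ltW.
  rewrite exprMn mulrACA mulVf // mul1r -exprD addnn -mul2n.
  by [].
have J01 : \int[P]_t (X 1%N t ^+ p * ind (X 1%N t))%:E =
           \int[P]_t (X 0%N t ^+ p * ind (X 0%N t))%:E.
  apply: (@ident_int 1%N (fun x => x ^+ p * ind x)%R).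
  - by apply: measurable_funM => //; exact: measurable_funX.
  - move=> x; have [->|indx] := eqVneq (ind x) 0%R; first by rewrite mulr0.
    have /andP[nx xK] := indP x indx.
    by rewrite mulr_ge0 ?(andP (ind01 _)).1 // exprn_ge0 // (le_trans (ltW n0)).
rewrite (_ : \int[P]_t (X 0%N t ^+ p * \1_([set` `[n%:R, K%:R]%R]) (X 0%N t))%:E =
           \int[P]_t (X 1%N t ^+ p * ind (X 1%N t))%:E); last by rewrite J01.
rewrite EFinM (muleC (2%:R ^- p)%:E) -muleA.
apply: le_trans step4.
apply: lee_wpmul2l; first by rewrite lee_fin exprn_ge0.
exact: le_trans step5 step3.
Qed.

Lemma part2 n p : (2 <= n)%N ->
  (2%:R ^- p * n%:R ^+ p)%:E *
    \int[P]_t (X 0%N t ^+ p * (\1_[set s | n%:R <= X 0%N s] t : R))%:E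
  <= \int[P]_t (X 1%N t ^+ (2 * p) / (n%:R^-1 * Ssum X n t) ^+ p)%:E.
Proof.
move=> n2.
set L := \int[P]_t (X 1%N t ^+ (2 * p) / (n%:R^-1 * Ssum X n t) ^+ p)%:E.
have n0 : (0 < n%:R :> R)%R by rewrite ltr0n (leq_trans _ n2).
pose g := fun (K : nat) t => (X 0%N t ^+ p * \1_([set` `[n%:R, K%:R]%R]) (X 0%N t))%:E.
have indE (K : nat) (x : R) : \1_([set` `[n%:R, K%:R]%R]) x = (n%:R <= x <= K%:R)%R%:R :> R.
  by rewrite indicE mem_setE in_itv.
have mg K : measurable_fun setT (g K).
  apply/measurable_EFinP; apply: measurable_funM; first exact: measurable_funX.
  by apply: measurableT_comp (mX 0%N); apply: measurable_indic; exact: measurable_itv.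
have g0 K t : 0 <= g K t.
  by rewrite lee_fin mulr_ge0 ?exprn_ge0 ?indE // ltW.
have ndg t : nondecreasing_seq (g ^~ t).
  move=> K1 K2 K12; rewrite lee_fin /= !indE.
  apply: ler_wpM2l; first by rewrite exprn_ge0 // ltW.
  case/boolP: (n%:R <= X 0%N t <= K1%:R)%R => //= /andP[h1 h2].
  by rewrite h1 (le_trans h2) // ler_nat.
have limg t : limn (g ^~ t) = (X 0%N t ^+ p * (\1_[set s | n%:R <= X 0%N s] t : R))%:E.
  apply: lim_near_cst => //.
  exists (Num.truncn (X 0%N t)).+1 => // K /= hK.
  rewrite /g indE indicE.
  have xK : (X 0%N t <= K%:R)%R.
    apply: ltW; apply: lt_le_trans (truncnS_gt _) _.
    by rewrite ler_nat.
  case/boolP: (n%:R <= X 0%N t)%R => h.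
    by rewrite xK mem_set.
  by rewrite memNset //=; exact/negP.
have hcvg := @cvg_monotone_convergence _ _ _ P setT measurableT g mg (fun K t _ => g0 K t) (fun t _ => ndg t).
set J := \int[P]_t (X 0%N t ^+ p * (\1_[set s | n%:R <= X 0%N s] t : R))%:E.
have EJ : \int[P]_x limn (g^~ x) = J by apply: eq_integral => t _; exact: limg.
rewrite EJ in hcvg.
have key K : (2%:R ^- p * n%:R ^+ p)%:E * \int[P]_t g K t <= L.
  exact: partK.
have c_fin : ((2%:R ^- p * n%:R ^+ p : R)%R)%:E \is a fin_num by [].
have := cvgeZl c_fin hcvg.
move/cvg_lim => <- //.
apply: lime_le; first by apply/cvg_ex; eexists; exact: cvgeZl c_fin hcvg.
exact: nearW.
Qed.

Lemma part1 p : (exists M : R, forall n : nat, \int[P]_t (Tn X n t ^+ p)%:E <= M%:E) ->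
  \int[P]_t (X 0%N t ^+ p)%:E < +oo.
Proof.
case=> M HM.
have H2 := @part2 2%N p isT.
have two0 : (2%:R ^+ p != 0 :> R)%R by rewrite expf_neq0 // pnatr_eq0.
rewrite mulVf // mul1e in H2.
set J := \int[P]_t _ in H2.
set L2 := \int[P]_t _ in H2.
have mS : measurable_fun setT (Ssum X 2).
  by rewrite /Ssum; apply: measurable_sum => i.
have S0 t : (0 < Ssum X 2 t)%R.
  by rewrite /Ssum big_ltn // addr_gt0 // big_nat1.
have mT : measurable_fun setT (fun t => Tn X 2 t ^+ p)%R.
  apply: measurable_funX; apply: measurable_funM.
    by apply: measurable_sum => i; exact: measurable_funX.
  exact: measurableT_comp (@minv R) mS.
have T0 t : (0 <= Tn X 2 t ^+ p)%R.
  apply: exprn_ge0; apply: divr_ge0; last exact: ltW.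
  by apply: sumr_ge0 => i _; exact: sqr_ge0.
have tp0 : (0 <= 2%:R ^+ p :> R)%R by rewrite exprn_ge0.
have HL : L2 <= (2%:R ^+ p)%:E * \int[P]_t (Tn X 2 t ^+ p)%:E.
  rewrite -(intZ tp0 mT T0); apply: intle => //.
  - apply: measurable_funM; first exact: measurable_funX.
    have h1 : measurable_fun setT (fun t => 2%:R^-1 * Ssum X 2 t)%R.
      by apply: measurable_funM => //; exact: measurable_cst.
    exact: measurableT_comp (@minv R) (measurable_funX p h1).
  - by apply: measurable_funM => //; exact: measurable_cst.
  - move=> t; apply: divr_ge0; first by rewrite exprn_ge0 // ltW.
    by rewrite exprn_ge0 // mulr_ge0 // ltW.
  - move=> t; rewrite /Tn exprMn exprVn invfM invrK mulrCA expr_div_n.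
    apply: ler_wpM2l => //.
    apply: ler_wpM2r; first by rewrite invr_ge0 exprn_ge0 // ltW.
    rewrite exprM; apply: lerXn2r; rewrite ?nnegrE ?sqr_ge0 //.
      by apply: sumr_ge0 => i _; exact: sqr_ge0.
    rewrite big_ltn // lerDl.
    by apply: sumr_ge0 => i _; exact: sqr_ge0.
have HJ : J <= (2%:R ^+ p * M)%:E.
  rewrite EFinM; apply: le_trans H2 (le_trans HL _).
  by apply: lee_wpmul2l; [rewrite lee_fin | exact: HM].
have ms : measurable [set s | 2%:R <= X 0%N s]%R.
  rewrite (_ : [set s | _] = X 0%N @^-1` [set` `[2%:R, +oo[%R]); last first.
    by apply/seteqP; split => s /=; rewrite in_itv /= andbT.
  rewrite -[X in measurable X]setTI; apply: (mX 0%N measurableT); exact: measurable_itv.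
have mf : measurable_fun setT (fun t => X 0%N t ^+ p * (\1_[set s | 2%:R <= X 0%N s] t : R))%R.
  by apply: measurable_funM; [exact: measurable_funX | exact: measurable_indic].
have f0 t : (0 <= X 0%N t ^+ p * (\1_[set s | 2%:R <= X 0%N s] t : R))%R.
  by rewrite mulr_ge0 // exprn_ge0 // ltW.
have mc : measurable_fun setT (fun _ : T => (2%:R ^+ p : R)%R) by exact: measurable_cst.
have H3 : \int[P]_t (X 0%N t ^+ p)%:E <=
    \int[P]_t (X 0%N t ^+ p * (\1_[set s | 2%:R <= X 0%N s] t : R) + 2%:R ^+ p)%:E.
  apply: intle => //.
  - exact: measurable_funX.
  - by apply: measurable_funD.
  - by move=> t; rewrite exprn_ge0 // ltW.
  move=> t; rewrite indicE.
  case/boolP: (2%:R <= X 0%N t)%R => h.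
    by rewrite mem_set // mulr1 lerDl.
  rewrite memNset /=; last exact/negP.
  rewrite mulr0 add0r; apply: lerXn2r; rewrite ?nnegrE ?ltW //.
  by rewrite ltNge.
rewrite (intD mf mc f0 (fun=> tp0)) in H3.
apply: le_lt_trans H3 _.
apply: (@le_lt_trans _ _ ((2%:R ^+ p * M)%:E + (2%:R ^+ p)%:E)).
  apply: leeD; first exact: HJ.
  exact: int_bound mc (fun=> tp0) (fun=> lexx _).
by rewrite -EFinD ltry.
Qed.
End main.

Theorem lemma2 (d : measure_display) (T : measurableType d) (R : realType)
  (P : probability T R) (X : nat -> T -> R) (p : nat)
  (HX : iid P X)
  (Hpos : forall i t, 0 < X i t)
  (HE1 : (\int[P]_t (X 0%N t)%:E = 1)%E)
  (HE2 : (\int[P]_t (X 0%N t ^+ 2)%:E < +oo)%E)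
  (Hp : (2 <= p)%N) :
  ((exists M : R, forall n : nat, (\int[P]_t (Tn X n t ^+ p)%:E <= M%:E)%E) ->
     (\int[P]_t (X 0%N t ^+ p)%:E < +oo)%E)
  /\
  (forall n : nat, (2 <= n)%N ->
     (\int[P]_t (X 1%N t ^+ (2 * p) / (n%:R^-1 * Ssum X n t) ^+ p)%:E
      >= (2%:R ^- p * n%:R ^+ p)%:E *
         \int[P]_t (X 0%N t ^+ p * (\1_[set s | n%:R <= X 0%N s] t : R))%:E)%E).
Proof.
case: HX => mX HD HI.
split.
- exact: (part1 mX HD HI Hpos HE1).
- move=> n n2; exact: (part2 mX HD HI Hpos HE1).
Qed.
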